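(* Let $V$ be a preference profile over a finite candidate set $C$ with a fixed tie-breaking order, and let $w$ be the 3-Approval winner at $V$. Let $Q$ be the set of candidates $x$ such that some voter $i$ with $w\in\mathrm{top}_3(v_i)$ (a Type 2 manipulator) manipulates in favour of $x$, i.e. has a vote $v_i'$ with $3\text{-App}(V_{-i},v_i')=x$ and $x\succ_i w$. Then $|Q|\le 2$.
   Context: Each voter $i$ has a strict linear order $v_i$ over $C$; $x\succ_i y$ means $i$ ranks $x$ above $y$; $\mathrm{top}_3(v)$ is the set of the three highest-ranked candidates of $v$. 3-Approval ($3\text{-App}$): each candidate gets one point from each voter ranking her among his top three; the highest score wins, ties broken in favour of the candidate highest in the fixed strict linear order on $C$. $(V_{-i},v_i')$ denotes $V$ with $v_i$ replaced by $v_i'$. *)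

(* Defs.v *)
From mathcomp Require Import all_boot all_order.
Set Implicit Arguments. Unset Strict Implicit. Unset Printing Implicit Defensive.

(* A strict linear order over the finite candidate set C is represented by a
   ranking: an injective (hence bijective) map from C to positions
   'I_#|C|, position 0 being the top.  x >_v y  iff  v x < v y. *)
Definition ranking (C : finType) := {ffun C -> 'I_#|C|}.

Definition is_vote (C : finType) (v : ranking C) : bool := injectiveb v.

Definition prefers (C : finType) (v : ranking C) (x y : C) : bool := v x < v y.

Definition top3 (C : finType) (v : ranking C) : {set C} := [set x | v x < 3].

Definition score3 (C : finType) (n : nat) (V : 'I_n -> ranking C) (x : C) : nat :=
  #|[set i : 'I_n | x \in top3 (V i)]|.

Definition app3_winner (C : finType) (tb : ranking C) (n : nat)
  (V : 'I_n -> ranking C) (x : C) : bool :=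
  [forall y, (score3 V y < score3 V x) ||
             ((score3 V y == score3 V x) && (tb x <= tb y))].

Definition upd (C : finType) (n : nat) (V : 'I_n -> ranking C) (i : 'I_n)
  (v' : ranking C) : 'I_n -> ranking C :=
  fun j => if j == i then v' else V j.

Definition type2_targets (C : finType) (tb : ranking C) (n : nat)
  (V : 'I_n -> ranking C) (w : C) : {set C} :=
  [set x | [exists i : 'I_n, (w \in top3 (V i)) &&
     [exists v' : ranking C, [&& is_vote v', app3_winner tb (upd V i v') x
                               & prefers (V i) x w]]]].

(* Main.v *)
Require Import Defs.
From mathcomp Require Import all_boot all_order.
From mathcomp Require Import zify.
Set Implicit Arguments. Unset Strict Implicit.

Lemma inj_ne (C : finType) (v : ranking C) x y :
  is_vote v -> x != y -> (nat_of_ord (v x)) != v y.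
Proof.
move=> /injectiveP Hv xy; apply/negP => /eqP E.
by move/negP: xy; apply; apply/eqP; apply: Hv; apply: val_inj.
Qed.

Lemma lemA (C : finType) (tb : ranking C) (n : nat)
  (V : 'I_n -> ranking C) (w x y : C) (i : 'I_n) (v' : ranking C) :
  app3_winner tb (upd V i v') x -> x \in top3 (V i) -> y \notin top3 (V i) ->
  score3 V y < score3 V x \/ (score3 V y = score3 V x /\ tb x <= tb y).
Proof.
move=> /forallP /(_ y) Hw; rewrite !inE => Hx Hy.
have H1 : score3 V y <= score3 (upd V i v') y.
  apply: subset_leq_card; apply/subsetP => j; rewrite !inE /upd.
  by case: eqP => // -> H; rewrite H in Hy.
have H2 : score3 (upd V i v') x <= score3 V x.
  apply: subset_leq_card; apply/subsetP => j; rewrite !inE /upd.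
  by case: eqP => // -> _.
case/orP: Hw => [H|/andP [/eqP H H']]; lia.
Qed.

Lemma memQ (C : finType) (tb : ranking C) (n : nat)
  (V : 'I_n -> ranking C) (w x : C) :
  x \in type2_targets tb V w ->
  exists i v', [/\ w \in top3 (V i), app3_winner tb (upd V i v') x &
                   prefers (V i) x w].
Proof.
rewrite inE => /existsP [i /andP [Hw /existsP [v' /and3P [_ Hx Hp]]]].
by exists i, v'.
Qed.

Lemma stepB (C : finType) (tb : ranking C) (n : nat)
  (V : 'I_n -> ranking C) (w a b c : C) :
  (forall i, is_vote (V i)) ->
  a \in type2_targets tb V w -> w != b -> w != c -> a != b -> a != c -> b != c ->
  (score3 V b < score3 V a \/ (score3 V b = score3 V a /\ tb a <= tb b)) \/
  (score3 V c < score3 V a \/ (score3 V c = score3 V a /\ tb a <= tb c)).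
Proof.
move=> Hv /memQ [i [v' [Hw Hwin Hp]]] wb wc ab ac bc.
move: Hw Hp; rewrite /prefers inE => Hw Hp.
have Ha : a \in top3 (V i) by rewrite inE; lia.
have wa : w != a.
  by apply/negP => /eqP E; move: Hp; rewrite E ltnn.
case Eb: (b \in top3 (V i)); last first.
  by left; apply: (@lemA _ _ _ _ w a b i v' Hwin Ha); rewrite Eb.
case Ec: (c \in top3 (V i)); last first.
  by right; apply: (@lemA _ _ _ _ w a c i v' Hwin Ha); rewrite Ec.
exfalso; move: Eb Ec; rewrite !inE => Eb Ec.
have := inj_ne (Hv i) wa; have := inj_ne (Hv i) wb; have := inj_ne (Hv i) wc.
have := inj_ne (Hv i) ab; have := inj_ne (Hv i) ac; have := inj_ne (Hv i) bc.
lia.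
Qed.

Lemma natfact (sa sb sc ta tb' tc : nat) :
  tc <> ta -> tb' <> tc -> ta <> tb' ->
  (sa < sc \/ sa = sc /\ tc <= ta) \/ sb < sc \/ sb = sc /\ tc <= tb' ->
  (sa < sb \/ sa = sb /\ tb' <= ta) \/ sc < sb \/ sc = sb /\ tb' <= tc ->
  (sb < sa \/ sb = sa /\ ta <= tb') \/ sc < sa \/ sc = sa /\ ta <= tc ->
  False.
Proof.
move=> ? ? ?.
case=> [[?|[? ?]]|[?|[? ?]]]; case=> [[?|[? ?]]|[?|[? ?]]]; case=> [[?|[? ?]]|[?|[? ?]]]; lia.
Qed.

Theorem mainTheorem11 (C : finType) (tb : ranking C) (n : nat)
  (V : 'I_n -> ranking C) (w : C) :
  is_vote tb -> (forall i, is_vote (V i)) ->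
  app3_winner tb V w ->
  #|type2_targets tb V w| <= 2.
Proof.
move=> Htb Hv _; rewrite leqNgt; apply/negP => /card_gt2P.
move=> [a [b [c [[Ha Hb Hc] [ab bc ca]]]]].
have wne : forall x, x \in type2_targets tb V w -> w != x.
  move=> x /memQ [i [v' [_ _ Hp]]]; apply/negP => /eqP E.
  by move: Hp; rewrite /prefers E ltnn.
have wa := wne _ Ha; have wb := wne _ Hb; have wc := wne _ Hc.
have ac : a != c by rewrite eq_sym.
have ba : b != a by rewrite eq_sym.
have cb : c != b by rewrite eq_sym.
have := stepB Hv Ha wb wc ab ac bc.
have := stepB Hv Hb wa wc ba bc ac.
have := stepB Hv Hc wa wb ca cb ab.
have := inj_ne Htb ab; have := inj_ne Htb bc; have := inj_ne Htb ca.
move: (score3 V a) (score3 V b) (score3 V c) (nat_of_ord (tb a)) (nat_of_ord (tb b)) (nat_of_ord (tb c)).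
move=> sa sb sc ta tb' tc.
move=> /eqP ? /eqP ? /eqP ?; exact: natfact.
Qed.
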